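(* Let $n\ge2$ and let $\Sigma=\mathbb{R}^n\subset\mathbb{R}^{n+1}$ be a hyperplane through the origin, $r=|\vec x|$. Define $$f_1(r)=-1+\sum_{m=1}^\infty\frac{m\,(2m-2)!}{2^{3m-1}(m!)^2\prod_{j=0}^{m-1}(n+2j)}\,r^{2m},$$ which has a unique positive root $r_1$. Then $f_1$ satisfies $Lf_1=0$ on $\Sigma$ and is a positive Jacobi function on $\{r>r_1\}$, but $f_1$ is not an eigenfunction on $\{r>r_1\}$; indeed $\int_{\{r>r_1\}}f_1^2e^{-r^2/4}\,d\mu=\infty$.
   Context: Stability operator on a self-shrinker: $Lf=\Delta f-\tfrac12\langle\vec x,\nabla f\rangle+(|A|^2+\tfrac12)f$ (on a hyperplane $|A|^2=0$). A Jacobi function is a function $u$ with $Lu=0$. An eigenfunction on a region $\Omega$ is a $u\not\equiv0$ in $L^2(\Omega,e^{-|\vec x|^2/4}d\mu)$ with $Lu=-\lambda u$ for some constant $\lambda$. *)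

(* Defs.v *)
From Stdlib Require Import Reals Lra Lia Arith ClassicalEpsilon.
Open Scope R_scope.

(* Points of R^n are represented as x : nat -> R; only the coordinates
   x 0, ..., x (n-1) are used (coordinates >= n are ignored). *)

Fixpoint rsum (k : nat) (f : nat -> R) : R :=
  match k with O => 0 | S k' => rsum k' f + f k' end.

Definition rnorm (n : nat) (x : nat -> R) : R := sqrt (rsum n (fun i => x i ^ 2)).

Definition upd (x : nat -> R) (i : nat) (t : R) : nat -> R :=
  fun j => if Nat.eqb j i then t else x j.

Fixpoint prodn (n m : nat) : R :=
  match m with O => 1 | S m' => prodn n m' * (INR n + 2 * INR m') end.

Definition coef (n m : nat) : R :=
  INR m * INR (Factorial.fact (2 * m - 2)) /
  (2 ^ (3 * m - 1) * (INR (Factorial.fact m)) ^ 2 * prodn n m).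

(* k-th term of the series (k = 0 corresponds to m = 1) *)
Definition f1_term (n : nat) (r : R) (k : nat) : R :=
  coef n (S k) * r ^ (2 * S k).

(* value of a convergent series (chosen classically; meaningful when it converges) *)
Definition series_sum (u : nat -> R) : R :=
  epsilon (inhabits 0) (fun l => infinite_sum u l).

Definition f1 (n : nat) (r : R) : R := -1 + series_sum (f1_term n r).

Definition F1 (n : nat) (x : nat -> R) : R := f1 n (rnorm n x).

(* L_at n u x v :  u is (pure-second-order) twice differentiable at x and
   (L u)(x) = Δu(x) - 1/2 <x, ∇u(x)> + 1/2 u(x) = v. *)
Definition L_at (n : nat) (u : (nat -> R) -> R) (x : nat -> R) (v : R) : Prop :=
  exists (delta : R) (du : nat -> (nat -> R) -> R) (d2 : nat -> R),
    0 < delta /\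
    (forall i, (i < n)%nat ->
       (forall y, rnorm n (fun j => y j - x j) < delta ->
          derivable_pt_lim (fun t => u (upd y i t)) (y i) (du i y)) /\
       derivable_pt_lim (fun t => du i (upd x i t)) (x i) (d2 i)) /\
    v = rsum n d2 - / 2 * rsum n (fun i => x i * du i x) + / 2 * u x.

(* IInt k g R x v : the iterated Riemann integral of g over the box [-R,R]^k
   in the coordinates 0..k-1 (the other coordinates fixed as in x) exists and
   equals v. *)
Fixpoint IInt (k : nat) (g : (nat -> R) -> R) (R0 : R) (x : nat -> R) (v : R) : Prop :=
  match k with
  | O => v = g x
  | S k' => exists h : R -> R,
      (forall t, IInt k' g R0 (upd x k' t) (h t)) /\
      exists pr : Riemann_integrable h (- R0) R0, RiemannInt pr = v
  end.

Definition ind (Omega : (nat -> R) -> Prop) (x : nat -> R) : R :=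
  if excluded_middle_informative (Omega x) then 1 else 0.

Definition wsq (n : nat) (Omega : (nat -> R) -> Prop) (u : (nat -> R) -> R)
  (x : nat -> R) : R :=
  u x ^ 2 * exp (- (rnorm n x) ^ 2 / 4) * ind Omega x.

(* u in L^2(Omega, e^{-|x|^2/4} dmu): the integrals of u^2 e^{-|x|^2/4} over
   Omega ∩ [-R,R]^n exist and are uniformly bounded (their supremum is the
   integral over Omega). *)
Definition L2w (n : nat) (Omega : (nat -> R) -> Prop) (u : (nat -> R) -> R) : Prop :=
  (forall R0, 0 < R0 -> exists v, IInt n (wsq n Omega u) R0 (fun _ => 0) v) /\
  exists M, forall R0 v, 0 < R0 -> IInt n (wsq n Omega u) R0 (fun _ => 0) v -> v <= M.

Definition eigenfunction (n : nat) (Omega : (nat -> R) -> Prop) (u : (nat -> R) -> R) : Prop :=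
  (exists x, Omega x /\ u x <> 0) /\ L2w n Omega u /\
  exists lam : R, forall x, Omega x -> L_at n u x (- lam * u x).

Definition jacobi_on (n : nat) (Omega : (nat -> R) -> Prop) (u : (nat -> R) -> R) : Prop :=
  forall x, Omega x -> L_at n u x 0.

(* Main.v *)
Require Import Defs.
From Stdlib Require Import Reals.
Open Scope R_scope.
From Stdlib Require Import Lra Lia Arith ClassicalEpsilon FunctionalExtensionality.
From Coquelicot Require Import Coquelicot.
Open Scope R_scope.


Definition ac (n k : nat) : R := match k with O => -1 | S _ => coef n k end.

Lemma prodn_pos n m : (1 <= n)%nat -> 0 < prodn n m.
Proof.
  intros Hn; induction m; simpl; [lra|].
  apply Rmult_lt_0_compat; auto.
  assert (1 <= INR n) by (apply (le_INR 1); lia). pose proof (pos_INR m). lra.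
Qed.

Lemma fact_pos_R k : 0 < INR (Factorial.fact k).
Proof. apply lt_0_INR, Factorial.lt_O_fact. Qed.

Lemma coef_pos n m : (1 <= n)%nat -> (1 <= m)%nat -> 0 < coef n m.
Proof.
  intros Hn Hm. unfold coef.
  apply Rmult_lt_0_compat; [apply Rmult_lt_0_compat|].
  - apply lt_0_INR; lia.
  - apply fact_pos_R.
  - apply Rinv_0_lt_compat. pose proof (fact_pos_R m). pose proof (prodn_pos n m Hn).
    apply Rmult_lt_0_compat; [apply Rmult_lt_0_compat|]; auto.
    + apply pow_lt; lra.
    + apply pow_lt; auto.
Qed.

Lemma coef_rec n p : (1 <= n)%nat ->
  coef n (S (S p)) = coef n (S p) * (2 * INR p + 1) / (4 * (INR p + 2) * (2 * INR p + 2 + INR n)).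
Proof.
  intros Hn. unfold coef.
  replace (2 * S (S p) - 2)%nat with (S (S (2 * p))) by lia.
  replace (2 * S p - 2)%nat with (2 * p)%nat by lia.
  replace (3 * S (S p) - 1)%nat with (3 + (3 * S p - 1))%nat by lia.
  rewrite pow_add.
  change (prodn n (S (S p))) with (prodn n (S p) * (INR n + 2 * INR (S p))).
  rewrite (fact_simpl (S (2*p))), (fact_simpl (2*p)).
  rewrite (fact_simpl (S p)).
  rewrite !mult_INR. rewrite !S_INR, mult_INR. simpl (INR 2).
  pose proof (fact_pos_R (2*p)). pose proof (fact_pos_R p). pose proof (prodn_pos n (S p) Hn).
  pose proof (pos_INR p). pose proof (pos_INR n).
  assert (0 < 2 ^ (3 * S p - 1)) by (apply pow_lt; lra).
  pose proof (fact_pos_R (S p)).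
  field. repeat split; try lra.
Qed.

Lemma ac_rec n k : (1 <= n)%nat ->
  ac n (S k) * INR (S k) * (4 * INR k + 2 * INR n) = (INR k - /2) * ac n k.
Proof.
  intros Hn. destruct k as [|p].
  - simpl ac. unfold coef. simpl.
    assert (1 <= INR n) by (apply (le_INR 1); lia). field. lra.
  - change (ac n (S (S p))) with (coef n (S (S p))). change (ac n (S p)) with (coef n (S p)).
    rewrite coef_rec by auto. rewrite !S_INR.
    pose proof (pos_INR p). pose proof (pos_INR n). field. lra.
Qed.

Lemma ac_pos n k : (1 <= n)%nat -> (1 <= k)%nat -> 0 < ac n k.
Proof. intros; destruct k; [lia|]; apply coef_pos; auto. Qed.

Lemma ac_neq0 n k : (1 <= n)%nat -> ac n k <> 0.
Proof. intros; destruct k; simpl; [lra|]. assert (1 <= S k)%nat by lia. pose proof (coef_pos n (S k) H H0); lra. Qed.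

Lemma ac_ratio n k : (1 <= n)%nat ->
  ac n (S k) / ac n k = (INR k - /2) / (INR (S k) * (4 * INR k + 2 * INR n)).
Proof.
  intros Hn. pose proof (ac_rec n k Hn). pose proof (ac_neq0 n k Hn).
  assert (1 <= INR n) by (apply (le_INR 1); lia). pose proof (pos_INR k).
  rewrite S_INR in *.
  assert (E: ac n (S k) = (INR k - /2) * ac n k / ((INR k + 1) * (4 * INR k + 2 * INR n))).
  { rewrite <- H. field. lra. }
  rewrite E. field. lra.
Qed.

Lemma CV_ac n : (1 <= n)%nat -> CV_radius (ac n) = p_infty.
Proof.
  intros Hn. apply CV_radius_infinite_DAlembert.
  - intros; apply ac_neq0; auto.
  - apply is_lim_seq_le_le with (u := fun _ => 0) (w := fun k => / (INR k + 1)).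
    + intros k. rewrite ac_ratio by auto. split; [apply Rabs_pos|].
      assert (1 <= INR n) by (apply (le_INR 1); lia). pose proof (pos_INR k).
      rewrite S_INR. rewrite Rabs_div.
      2:{ apply Rmult_integral_contrapositive; split; lra. }
      rewrite (Rabs_right (_ * _)) by (apply Rle_ge; apply Rmult_le_pos; lra).
      apply Rle_trans with ((INR k + 1) / ((INR k + 1) * (INR k + 1))).
      * unfold Rdiv. apply Rmult_le_compat.
        -- apply Rabs_pos.
        -- apply Rlt_le, Rinv_0_lt_compat. apply Rmult_lt_0_compat; lra.
        -- apply Rabs_le; lra.
        -- apply Rinv_le_contravar; [apply Rmult_lt_0_compat; lra|]. apply Rmult_le_compat_l; lra.
      * right. field. lra.
    + apply is_lim_seq_const.
    + replace (Finite 0) with (Rbar_inv p_infty) by reflexivity.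
      apply is_lim_seq_inv; [|discriminate].
      apply is_lim_seq_ext with (fun k => INR (S k)). { intros; rewrite S_INR; auto. }
      apply (is_lim_seq_incr_1 INR p_infty), is_lim_seq_INR.
Qed.

Definition G n x := PSeries (ac n) x.
Definition G1 n x := PSeries (PS_derive (ac n)) x.
Definition G2 n x := PSeries (PS_derive (PS_derive (ac n))) x.

Lemma rlt_inf x a : CV_radius a = p_infty -> Rbar_lt (Rabs x) (CV_radius a).
Proof. intros H; rewrite H; exact I. Qed.

Lemma CV_ac1 n : (1 <= n)%nat -> CV_radius (PS_derive (ac n)) = p_infty.
Proof. intros; rewrite CV_radius_derive; apply CV_ac; auto. Qed.
Lemma CV_ac2 n : (1 <= n)%nat -> CV_radius (PS_derive (PS_derive (ac n))) = p_infty.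
Proof. intros; rewrite !CV_radius_derive; apply CV_ac; auto. Qed.

Lemma f1_sum n r : (1 <= n)%nat -> infinite_sum (f1_term n r) (G n (r^2) + 1).
Proof.
  intros Hn. apply is_series_Reals.
  pose proof (PSeries_correct (ac n) (r^2) (CV_radius_inside _ _ (rlt_inf _ _ (CV_ac n Hn)))) as H.
  unfold is_pseries in H.
  assert (H2 := is_series_incr_1 (fun k => scal (pow_n (r^2) k) (ac n k)) (G n (r^2) + 1)).
  eapply is_series_ext; [|apply H2].
  - intros k. simpl. rewrite pow_n_pow. unfold f1_term. rewrite pow_mult.
    unfold scal; simpl; unfold mult; simpl. ring.
  - match goal with |- is_series _ ?l => replace l with (G n (r^2)) end.
    + exact H.
    + unfold plus, scal; simpl; unfold mult, one; simpl. ring.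
Qed.

Lemma series_sum_eq u l : infinite_sum u l -> series_sum u = l.
Proof.
  intros H. unfold series_sum.
  assert (H1 : infinite_sum u (epsilon (inhabits 0) (fun l => infinite_sum u l))).
  { apply epsilon_spec. exists l; auto. }
  apply is_series_Reals in H1. apply is_series_Reals in H.
  apply is_series_unique in H1. apply is_series_unique in H. congruence.
Qed.

Lemma f1_G n r : (1 <= n)%nat -> f1 n r = G n (r^2).
Proof. intros Hn. unfold f1. rewrite (series_sum_eq _ _ (f1_sum n r Hn)). ring. Qed.

Lemma G_der n s : (1 <= n)%nat -> derivable_pt_lim (G n) s (G1 n s).
Proof. intros Hn. apply is_derive_Reals. apply is_derive_PSeries, rlt_inf, CV_ac; auto. Qed.
Lemma G1_der n s : (1 <= n)%nat -> derivable_pt_lim (G1 n) s (G2 n s).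
Proof. intros Hn. apply is_derive_Reals. apply is_derive_PSeries, rlt_inf, CV_ac1; auto. Qed.

Lemma ex_ps a x : CV_radius a = p_infty -> ex_pseries a x.
Proof. intros; apply CV_radius_inside, rlt_inf; auto. Qed.

Lemma G_ode n s : (1 <= n)%nat ->
  4 * s * G2 n s + (2 * INR n - s) * G1 n s + G n s / 2 = 0.
Proof.
  intros Hn.
  pose (c := PS_plus (PS_plus (PS_scal 4 (PS_incr_1 (PS_derive (PS_derive (ac n)))))
                             (PS_scal (2 * INR n) (PS_derive (ac n))))
                     (PS_plus (PS_scal (-1) (PS_incr_1 (PS_derive (ac n)))) (PS_scal (/2) (ac n)))).
  assert (E1 : PSeries c s = 4 * s * G2 n s + (2 * INR n - s) * G1 n s + G n s / 2).
  { unfold c. pose proof (ex_ps _ s (CV_ac n Hn)). pose proof (ex_ps _ s (CV_ac1 n Hn)).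
    pose proof (ex_ps _ s (CV_ac2 n Hn)).
    rewrite PSeries_plus; [|apply ex_pseries_plus|apply ex_pseries_plus].
    2,3,4,5: try (apply ex_pseries_scal; [apply Rmult_comm|]); try apply ex_pseries_incr_1; auto.
    rewrite !PSeries_plus.
    all: try (apply ex_pseries_scal; [apply Rmult_comm|]); try apply ex_pseries_incr_1; auto.
    rewrite !PSeries_scal, !PSeries_incr_1. unfold G, G1, G2. field. }
  rewrite <- E1. rewrite (PSeries_ext c (fun _ => 0)).
  - apply PSeries_const_0.
  - intros k. unfold c, PS_plus, PS_scal, PS_incr_1, PS_derive. simpl plus. simpl scal.
    change (@plus R_AbsRing) with Rplus. 
    destruct k as [|p].
    + unfold plus, scal, zero. simpl. unfold mult. simpl. unfold coef. simpl.
      assert (1 <= INR n) by (apply (le_INR 1); lia). field. lra.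
    + pose proof (ac_rec n (S p) Hn). simpl ac in H.
      unfold plus, scal. simpl. unfold mult. simpl.
      replace (match p with | 0%nat => 1 | S _ => INR p + 1 end) with (INR p + 1) by (destruct p; simpl; ring).
      rewrite !S_INR in *. lra.
Qed.

Definition Qn n (y : nat -> R) := rsum n (fun i => y i ^ 2).

Lemma rsum_nonneg m f : (forall i, 0 <= f i) -> 0 <= rsum m f.
Proof. intros H; induction m; simpl; [lra|]. specialize (H m); lra. Qed.

Lemma Qn_nonneg n y : 0 <= Qn n y.
Proof. apply rsum_nonneg. intros; apply pow2_ge_0. Qed.

Lemma rnorm_sq n y : rnorm n y ^ 2 = Qn n y.
Proof. unfold rnorm. simpl. rewrite Rmult_1_r. apply sqrt_sqrt. apply Qn_nonneg. Qed.

Lemma rnorm_nonneg n y : 0 <= rnorm n y.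
Proof. apply sqrt_pos. Qed.

Lemma F1_G n y : (1 <= n)%nat -> F1 n y = G n (Qn n y).
Proof. intros Hn. unfold F1. rewrite f1_G by auto. rewrite rnorm_sq. auto. Qed.

Lemma rsum_ext m f g : (forall i, f i = g i) -> rsum m f = rsum m g.
Proof. intros H; induction m; simpl; auto. rewrite IHm, H; auto. Qed.

Lemma rsum_lin m a b f : rsum m (fun i => a + b * f i) = INR m * a + b * rsum m f.
Proof. induction m; simpl rsum; [simpl; ring|]. rewrite IHm, S_INR. ring. Qed.

Lemma rsum_upd m y i t : rsum m (fun j => upd y i t j ^ 2) =
  rsum m (fun j => y j ^ 2) + (if Nat.ltb i m then t^2 - y i^2 else 0).
Proof.
  induction m; cbn [rsum]; [simpl; ring|]. rewrite IHm. unfold upd.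
  destruct (Nat.eqb m i) eqn:E.
  - apply Nat.eqb_eq in E; subst. 
    replace (Nat.ltb i i) with false by (symmetry; apply Nat.ltb_irrefl).
    replace (Nat.ltb i (S i)) with true by (symmetry; apply Nat.ltb_lt; lia). ring.
  - apply Nat.eqb_neq in E.
    destruct (Nat.ltb i m) eqn:E1; destruct (Nat.ltb i (S m)) eqn:E2; try ring.
    + apply Nat.ltb_lt in E1; apply Nat.ltb_ge in E2; lia.
    + apply Nat.ltb_ge in E1; apply Nat.ltb_lt in E2; lia.
Qed.

Lemma Qn_upd n y i t : (i < n)%nat -> Qn n (upd y i t) = Qn n y - y i ^ 2 + t ^ 2.
Proof.
  intros H. unfold Qn. rewrite rsum_upd.
  replace (Nat.ltb i n) with true by (symmetry; apply Nat.ltb_lt; lia). ring.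
Qed.

Lemma upd_same y i t : upd y i t i = t.
Proof. unfold upd. rewrite Nat.eqb_refl. auto. Qed.

Lemma der_quad c x : derivable_pt_lim (fun t => c + t ^ 2) x (2 * x).
Proof.
  apply is_derive_Reals. auto_derive; auto. ring.
Qed.

Lemma F1_partial n y i : (1 <= n)%nat -> (i < n)%nat ->
  derivable_pt_lim (fun t => F1 n (upd y i t)) (y i) (2 * y i * G1 n (Qn n y)).
Proof.
  intros Hn Hi.
  replace (fun t => F1 n (upd y i t)) with (comp (G n) (fun t => (Qn n y - y i ^ 2) + t ^ 2)).
  2:{ apply functional_extensionality; intros t. unfold comp. rewrite F1_G by auto.
      rewrite Qn_upd by auto. auto. }
  replace (2 * y i * G1 n (Qn n y)) with (G1 n (Qn n y - y i ^2 + y i ^ 2) * (2 * y i)).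
  2:{ replace (Qn n y - y i ^2 + y i ^ 2) with (Qn n y) by ring. ring. }
  apply derivable_pt_lim_comp; [apply der_quad|]. apply G_der; auto.
Qed.

Lemma du_partial n x i : (1 <= n)%nat -> (i < n)%nat ->
  derivable_pt_lim (fun t => 2 * upd x i t i * G1 n (Qn n (upd x i t))) (x i)
     (2 * G1 n (Qn n x) + 4 * x i ^ 2 * G2 n (Qn n x)).
Proof.
  intros Hn Hi.
  replace (fun t => 2 * upd x i t i * G1 n (Qn n (upd x i t))) with
     (fun t => (2 * t) * comp (G1 n) (fun t => (Qn n x - x i ^ 2) + t ^ 2) t).
  2:{ apply functional_extensionality; intros t. unfold comp. rewrite upd_same, Qn_upd by auto. auto. }
  replace (2 * G1 n (Qn n x) + 4 * x i ^ 2 * G2 n (Qn n x)) with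
    (2 * comp (G1 n) (fun t => (Qn n x - x i ^ 2) + t ^ 2) (x i) +
     (2 * x i) * (G2 n (Qn n x - x i ^2 + x i ^ 2) * (2 * x i))).
  2:{ unfold comp. replace (Qn n x - x i ^2 + x i ^ 2) with (Qn n x) by ring. ring. }
  apply (derivable_pt_lim_mult (fun t => 2 * t)).
  - apply is_derive_Reals. auto_derive; auto. ring.
  - apply derivable_pt_lim_comp; [apply der_quad|]. apply G1_der; auto.
Qed.

Lemma F1_L n x : (1 <= n)%nat -> L_at n (F1 n) x 0.
Proof.
  intros Hn.
  exists 1, (fun i y => 2 * y i * G1 n (Qn n y)),
    (fun i => 2 * G1 n (Qn n x) + 4 * x i ^ 2 * G2 n (Qn n x)).
  split; [lra|]. split.
  - intros i Hi. split.
    + intros y _. apply F1_partial; auto.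
    + apply du_partial; auto.
  - rewrite (rsum_ext n _ (fun i => 2 * G1 n (Qn n x) + (4 * G2 n (Qn n x)) * x i ^ 2))
      by (intros; ring).
    rewrite (rsum_ext n (fun i => x i * (2 * x i * G1 n (Qn n x))) (fun i => 0 + (2 * G1 n (Qn n x)) * x i ^ 2)) by (intros; ring).
    rewrite !rsum_lin. fold (Qn n x). rewrite F1_G by auto.
    pose proof (G_ode n (Qn n x) Hn). lra.
Qed.

Lemma sum_nonneg u k : (forall k, 0 <= u k) -> 0 <= sum_f_R0 u k.
Proof. intros H; induction k; simpl; auto. specialize (H (S k)); lra. Qed.

Lemma series_term_le u l : (forall k, 0 <= u k) -> infinite_sum u l -> forall k, u k <= l.
Proof.
  intros Hp Hs k.
  apply Rle_trans with (sum_f_R0 u k).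
  - destruct k; simpl; [lra|]. pose proof (sum_nonneg u k Hp); lra.
  - apply growing_ineq; [|exact Hs].
    intros m; simpl. specialize (Hp (S m)); lra.
Qed.

Lemma G_term n s k : (1 <= n)%nat -> 0 <= s -> ac n (S k) * s ^ (S k) <= G n s + 1.
Proof.
  intros Hn Hs.
  pose proof (f1_sum n (sqrt s) Hn) as H.
  replace (sqrt s ^ 2) with s in H by (simpl; rewrite Rmult_1_r, sqrt_sqrt; auto).
  pose proof (series_term_le (f1_term n (sqrt s)) _ ltac:(intros j; unfold f1_term; apply Rmult_le_pos;
     [apply Rlt_le, coef_pos; lia | rewrite pow_mult; apply pow_le; apply pow2_ge_0]) H k) as H1.
  unfold f1_term in H1. rewrite pow_mult in H1.
  replace (sqrt s ^ 2) with s in H1 by (simpl; rewrite Rmult_1_r, sqrt_sqrt; auto).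
  exact H1.
Qed.

Lemma G1_pos n s : (1 <= n)%nat -> 0 <= s -> ac n 1 <= G1 n s.
Proof.
  intros Hn Hs.
  pose proof (PSeries_correct _ s (ex_ps _ s (CV_ac1 n Hn))) as H.
  unfold is_pseries in H. apply is_series_Reals in H.
  assert (Hp : forall j, 0 <= scal (pow_n s j) (PS_derive (ac n) j)).
  { intros j. unfold scal. simpl. unfold mult. simpl.
    unfold PS_derive. apply Rmult_le_pos.
    { induction j; simpl; unfold one, mult; simpl; [lra|]. apply Rmult_le_pos; auto. }
    apply Rmult_le_pos; [apply pos_INR| apply Rlt_le, ac_pos; lia]. }
  pose proof (series_term_le _ _ Hp H 0%nat) as H1.
  unfold G1. revert H1. unfold scal; simpl; unfold mult, one; simpl. unfold PS_derive. simpl. lra.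
Qed.

Lemma a1_pos n : (1 <= n)%nat -> 0 < ac n 1.
Proof. intros; apply ac_pos; lia. Qed.

Lemma G_incr n s t : (1 <= n)%nat -> 0 <= s -> s < t -> G n s < G n t.
Proof.
  intros Hn Hs Hst.
  destruct (MVT_cor2 (G n) (G1 n) s t Hst) as [c [Hc1 Hc2]].
  { intros c _; apply G_der; auto. }
  pose proof (G1_pos n c Hn ltac:(lra)). pose proof (a1_pos n Hn).
  assert (0 < G1 n c * (t - s)) by (apply Rmult_lt_0_compat; lra). lra.
Qed.

Lemma G_le n s t : (1 <= n)%nat -> 0 <= s -> s <= t -> G n s <= G n t.
Proof. intros Hn Hs Hst. destruct (Req_dec s t); [subst; lra|]. left; apply G_incr; auto; lra. Qed.

Lemma G_0 n : G n 0 = -1.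
Proof. unfold G. rewrite PSeries_0. reflexivity. Qed.

Lemma G_cont n s : (1 <= n)%nat -> continuity_pt (G n) s.
Proof. intros Hn. apply derivable_continuous_pt. exists (G1 n s). apply G_der; auto. Qed.

Lemma root_unique n : (1 <= n)%nat -> exists! r1, 0 < r1 /\ f1 n r1 = 0.
Proof.
  intros Hn. pose proof (a1_pos n Hn) as Ha.
  set (R1 := 2 / ac n 1 + 1).
  assert (HR : 0 < R1) by (unfold R1; assert (0 < 2 / ac n 1) by (apply Rdiv_lt_0_compat; lra); lra).
  assert (HGR : 0 < G n (R1 ^ 2)).
  { pose proof (G_term n (R1 ^ 2) 0 Hn ltac:(apply pow2_ge_0)).
    assert (2 / ac n 1 <= R1 ^ 2).
    { unfold R1. assert (0 < 2 / ac n 1) by (apply Rdiv_lt_0_compat; lra). nra. }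
    assert (2 <= ac n 1 * R1 ^ 2).
    { apply Rmult_le_compat_l with (r := ac n 1) in H0; [|lra].
      replace (ac n 1 * (2 / ac n 1)) with 2 in H0 by (field; lra). lra. }
    rewrite pow_1 in H. lra. }
  destruct (IVT (fun r => G n (r ^ 2)) 0 R1) as [z [Hz1 Hz2]]; auto.
  - intros r. apply (continuity_pt_comp (fun r => r ^ 2) (G n)).
    + apply derivable_continuous_pt. apply derivable_pt_pow.
    + apply G_cont; auto.
  - simpl. rewrite Rmult_0_l, G_0. lra.
  - assert (Hz : z <> 0).
    { intros ->. simpl in Hz2. rewrite Rmult_0_l, G_0 in Hz2. lra. }
    exists z. split.
    + split; [lra|]. rewrite f1_G; auto.
    + intros r [Hr1 Hr2]. rewrite f1_G in Hr2 by auto.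
      destruct (Rtotal_order (z ^ 2) (r ^ 2)) as [Hl|[He|Hl]].
      * pose proof (G_incr n _ _ Hn (pow2_ge_0 z) Hl). simpl in *. lra.
      * assert (0 < z) by lra. 
        apply Rsqr_inj; try lra. unfold Rsqr. simpl in He. lra.
      * pose proof (G_incr n _ _ Hn (pow2_ge_0 r) Hl). simpl in *. lra.
Qed.

Fixpoint Psi (p : R -> R) (R0 : R) (k : nat) (c : R) : R :=
  match k with O => p c | S k' => RInt (fun t => Psi p R0 k' (c + t ^ 2)) (- R0) R0 end.

Lemma cont_shift (f : R -> R) c t : (forall z, continuity_pt f z) -> continuity_pt (fun t => f (c + t ^ 2)) t.
Proof.
  intros Hf. apply (continuity_pt_comp (fun t => c + t ^ 2) f).
  - apply derivable_continuous_pt. exists (2 * t). apply der_quad.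
  - apply Hf.
Qed.

Lemma ex_RInt_shift (f : R -> R) c a b : (forall z, continuity_pt f z) ->
  ex_RInt (fun t => f (c + t ^ 2)) a b.
Proof.
  intros Hf. apply (ex_RInt_continuous (V := R_CompleteNormedModule)). intros z _. apply continuity_pt_filterlim.
  apply cont_shift; auto.
Qed.

Lemma Psi_cont p R0 : (forall c, continuity_pt p c) -> 0 < R0 ->
  forall k c, continuity_pt (Psi p R0 k) c.
Proof.
  intros Hp HR. induction k as [|k IH]; intros c; [apply Hp|].
  unfold continuity_pt, continue_in, limit1_in, limit_in. intros eps Heps.
  assert (He' : 0 < eps / (2 * (2 * R0 + 1))) by (apply Rdiv_lt_0_compat; lra).
  destruct (@Heine_cor2 (Psi p R0 k) (c - 1) (c + 1 + R0 ^ 2) (fun x _ => IH x) (mkposreal _ He'))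
    as [[delta Hd] Hdelta]. simpl in Hdelta.
  exists (Rmin delta 1). split; [apply Rmin_Rgt_r; lra|].
  intros c' [_ Hc']. change (Rdist c' c < Rmin delta 1) in Hc'.
  change (Rdist (Psi p R0 (S k) c') (Psi p R0 (S k) c) < eps). cbn [Psi]. unfold Rdist in *.
  assert (Hc1 : Rabs (c' - c) < delta) by (eapply Rlt_le_trans; [apply Hc'|apply Rmin_l]).
  assert (Hc2 : Rabs (c' - c) < 1) by (eapply Rlt_le_trans; [apply Hc'|apply Rmin_r]).
  apply Rabs_lt_between in Hc2.
  pose proof (ex_RInt_shift (Psi p R0 k) c' (-R0) R0 IH) as E1.
  pose proof (ex_RInt_shift (Psi p R0 k) c (-R0) R0 IH) as E2.
  assert (Hm := RInt_minus _ _ _ _ E1 E2).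
  change (minus (RInt (fun t => Psi p R0 k (c' + t ^ 2)) (- R0) R0) (RInt (fun t => Psi p R0 k (c + t ^ 2)) (- R0) R0))
    with (RInt (fun t => Psi p R0 k (c' + t ^ 2)) (- R0) R0 - RInt (fun t => Psi p R0 k (c + t ^ 2)) (- R0) R0) in Hm.
  rewrite <- Hm.
  eapply Rle_lt_trans.
  - apply (abs_RInt_le_const _ (-R0) R0 (eps / (2 * (2 * R0 + 1)))); [lra| |].
    + apply ex_RInt_minus; auto.
    + intros t Ht. change (minus (Psi p R0 k (c' + t ^ 2)) (Psi p R0 k (c + t ^ 2)))
        with (Psi p R0 k (c' + t ^ 2) - Psi p R0 k (c + t ^ 2)).
      left. apply Hdelta.
      * split; nra.
      * split; nra.
      * replace (c' + t ^ 2 - (c + t ^ 2)) with (c' - c) by ring. auto.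
  - replace ((R0 - - R0) * (eps / (2 * (2 * R0 + 1)))) with (eps * (2 * R0 / (2 * (2 * R0 + 1)))) by (field; lra).
    rewrite <- (Rmult_1_r eps) at 2. apply Rmult_lt_compat_l; auto.
    apply Rmult_lt_reg_r with (2 * (2 * R0 + 1)); [lra|]. unfold Rdiv. rewrite Rmult_assoc, Rinv_l; lra.
Qed.

Lemma Psi_nonneg p R0 : (forall c, continuity_pt p c) -> (forall s, 0 <= p s) -> 0 < R0 ->
  forall k c, 0 <= Psi p R0 k c.
Proof.
  intros Hc Hp HR. induction k; intros c; simpl; auto.
  apply RInt_ge_0; [lra| |intros; auto]. apply ex_RInt_shift, Psi_cont; auto.
Qed.

Lemma Psi_LB p R0 : (forall c, continuity_pt p c) -> (forall s, 0 <= p s) -> 1 <= R0 ->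
  forall k c L, 0 <= L -> (forall s, c <= s <= c + INR k -> L <= p s) -> 2 ^ k * L <= Psi p R0 k c.
Proof.
  intros Hc Hp HR. induction k as [|k IH]; intros c L HL HLs.
  - simpl. rewrite Rmult_1_l. apply HLs. simpl; lra.
  - cbn [Psi]. set (f := fun t => Psi p R0 k (c + t ^ 2)).
    assert (Ef : forall a b, ex_RInt f a b) by (intros; apply ex_RInt_shift, Psi_cont; auto; lra).
    rewrite <- (RInt_Chasles f (-R0) (-1) R0) by auto.
    rewrite <- (RInt_Chasles f (-1) 1 R0) by auto.
    change (plus (RInt f (- R0) (-1)) (plus (RInt f (-1) 1) (RInt f 1 R0)))
      with (RInt f (- R0) (-1) + (RInt f (-1) 1 + RInt f 1 R0)).
    assert (0 <= RInt f (-R0) (-1)) by (apply RInt_ge_0; [lra|apply Ef|intros; unfold f; apply Psi_nonneg; auto; lra]).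
    assert (0 <= RInt f 1 R0) by (apply RInt_ge_0; [lra|apply Ef|intros; unfold f; apply Psi_nonneg; auto; lra]).
    assert (2 ^ S k * L <= RInt f (-1) 1).
    { replace (2 ^ S k * L) with (RInt (fun _ => 2 ^ k * L) (-1) 1).
      2:{ rewrite RInt_const. change (scal (1 - -1) (2 ^ k * L)) with ((1 - -1) * (2 ^ k * L)). simpl; ring. }
      apply RInt_le; [lra|apply ex_RInt_const|auto|].
      intros t Ht. unfold f. apply IH; auto.
      intros s Hs. apply HLs. rewrite S_INR. nra. }
    lra.
Qed.

Definition tailQ n k (x : nat -> R) := rsum n (fun i => if Nat.ltb i k then 0 else x i ^ 2).

Lemma tailQ_upd_gen m k x t : rsum m (fun i => if Nat.ltb i k then 0 else upd x k t i ^ 2) =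
  rsum m (fun i => if Nat.ltb i (S k) then 0 else x i ^ 2) + (if Nat.ltb k m then t ^ 2 else 0).
Proof.
  induction m; cbn [rsum]; [simpl; ring|]. rewrite IHm. unfold upd.
  destruct (Nat.eqb m k) eqn:E.
  - apply Nat.eqb_eq in E; subst.
    replace (Nat.ltb k k) with false by (symmetry; apply Nat.ltb_irrefl).
    replace (Nat.ltb k (S k)) with true by (symmetry; apply Nat.ltb_lt; lia). ring.
  - apply Nat.eqb_neq in E.
    destruct (Nat.ltb m k) eqn:E1; destruct (Nat.ltb m (S k)) eqn:E2;
    destruct (Nat.ltb k m) eqn:E3; destruct (Nat.ltb k (S m)) eqn:E4; try ring;
    repeat match goal with
    | H : Nat.ltb _ _ = true |- _ => apply Nat.ltb_lt in H
    | H : Nat.ltb _ _ = false |- _ => apply Nat.ltb_ge in H end; lia.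
Qed.

Lemma tailQ_upd n k x t : (k < n)%nat -> tailQ n k (upd x k t) = t ^ 2 + tailQ n (S k) x.
Proof.
  intros H. unfold tailQ. rewrite tailQ_upd_gen.
  replace (Nat.ltb k n) with true by (symmetry; apply Nat.ltb_lt; lia). ring.
Qed.

Lemma tailQ_0 n x : tailQ n 0 x = Qn n x.
Proof. unfold tailQ, Qn. apply rsum_ext. intros i. destruct i; simpl; auto. Qed.

Lemma tailQ_n n x : tailQ n n x = 0.
Proof.
  unfold tailQ. assert (forall m, (m <= n)%nat -> rsum m (fun i => if Nat.ltb i n then 0 else x i ^ 2) = 0).
  { induction m; intros Hm; cbn [rsum]; auto. rewrite IHm by lia.
    replace (Nat.ltb m n) with true by (symmetry; apply Nat.ltb_lt; lia). ring. }
  apply H; lia.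
Qed.

Lemma IInt_Psi n p R0 g : (forall c, continuity_pt p c) -> 0 < R0 ->
  (forall y, g y = p (Qn n y)) ->
  forall k, (k <= n)%nat -> forall x, IInt k g R0 x (Psi p R0 k (tailQ n k x)).
Proof.
  intros Hc HR Hg. induction k as [|k IH]; intros Hk x.
  - simpl. rewrite tailQ_0, Hg. auto.
  - simpl. exists (fun t => Psi p R0 k (tailQ n k (upd x k t))). split.
    + intros t. apply IH. lia.
    + assert (Ex : forall t, Psi p R0 k (tailQ n k (upd x k t)) = Psi p R0 k (tailQ n (S k) x + t ^ 2)).
      { intros t. rewrite tailQ_upd by lia. rewrite Rplus_comm. auto. }
      assert (E : ex_RInt (fun t => Psi p R0 k (tailQ n k (upd x k t))) (- R0) R0).
      { eapply ex_RInt_ext; [intros t _; symmetry; apply Ex|]. apply ex_RInt_shift, Psi_cont; auto. }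
      exists (ex_RInt_Reals_0 _ _ _ E). rewrite <- RInt_Reals.
      apply RInt_ext. intros t _. apply Ex.
Qed.

Definition mx n s := Rmax (G n s) 0.
Definition psi n s := mx n s * mx n s * exp (- s / 4).

Lemma Rmax0_eq y : Rmax y 0 = (y + Rabs y) / 2.
Proof.
  destruct (Rle_dec 0 y).
  - rewrite Rmax_left, Rabs_right; lra.
  - rewrite Rmax_right, Rabs_left; lra.
Qed.



Lemma mx_cont n s : (1 <= n)%nat -> continuity_pt (mx n) s.
Proof.
  intros Hn. unfold mx.
  assert (E : (fun s => Rmax (G n s) 0) = comp (fun y => (y + Rabs y) / 2) (G n)).
  { apply functional_extensionality; intros; unfold comp; apply Rmax0_eq. }
  rewrite E. apply continuity_pt_comp; [apply G_cont; auto|].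
  set (y := G n s).
  assert (E2 : (fun y => (y + Rabs y) / 2) = mult_fct (plus_fct id Rabs) (fct_cte (/2))).
  { apply functional_extensionality; intros; unfold mult_fct, plus_fct, fct_cte, id. field. }
  rewrite E2. apply continuity_pt_mult; [apply continuity_pt_plus|apply continuity_pt_const].
  - apply derivable_continuous_pt, derivable_pt_id.
  - apply Rcontinuity_abs.
  - intros a b; auto.
Qed.

Lemma psi_cont n s : (1 <= n)%nat -> continuity_pt (psi n) s.
Proof.
  intros Hn.
  change (psi n) with (mult_fct (mult_fct (mx n) (mx n)) (fun s => exp (- s / 4))).
  apply continuity_pt_mult; [apply continuity_pt_mult; apply mx_cont; auto|].
  apply derivable_continuous_pt. exists (exp (- s / 4) * (- / 4)).
  apply is_derive_Reals. auto_derive; auto. unfold Rdiv; ring.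
Qed.

Lemma psi_nonneg n s : 0 <= psi n s.
Proof.
  unfold psi. apply Rmult_le_pos; [|apply Rlt_le, exp_pos].
  assert (0 <= mx n s) by (unfold mx; apply Rmax_r). nra.
Qed.

Lemma wsq_psi n r1 : (1 <= n)%nat -> 0 < r1 -> G n (r1 ^ 2) = 0 ->
  forall y, wsq n (fun x => r1 < rnorm n x) (F1 n) y = psi n (Qn n y).
Proof.
  intros Hn Hr HG y. unfold wsq, psi, mx, Defs.ind. rewrite F1_G by auto. rewrite rnorm_sq.
  pose proof (rnorm_sq n y). pose proof (rnorm_nonneg n y).
  destruct (excluded_middle_informative (r1 < rnorm n y)) as [H1|H1].
  - assert (r1 ^ 2 < Qn n y) by nra.
    pose proof (G_incr n _ _ Hn (pow2_ge_0 r1) H2).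
    rewrite Rmax_left by lra.
    ring.
  - assert (Qn n y <= r1 ^ 2) by nra.
    pose proof (G_le n _ _ Hn (Qn_nonneg n y) H2).
    rewrite Rmax_right by lra. ring.
Qed.


Lemma binom2 x y m : 0 <= x -> 0 <= y -> x ^ (S m) + INR (S m) * x ^ m * y <= (x + y) ^ (S m).
Proof.
  intros Hx Hy. induction m.
  - simpl. lra.
  - assert (H1 : (x + y) * (x ^ S m + INR (S m) * x ^ m * y) <= (x + y) * (x + y) ^ S m)
      by (apply Rmult_le_compat_l; lra).
    change ((x + y) ^ S (S m)) with ((x + y) * (x + y) ^ S m).
    pose proof (pow_le x m Hx). pose proof (pos_INR m).
    assert (0 <= (INR m + 1) * x ^ m * (y * y)) by (apply Rmult_le_pos; [apply Rmult_le_pos|]; nra).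
    rewrite !S_INR in *. simpl pow in *. nra.
Qed.

Lemma fact_bound j : INR (fact (6 + j)) <= (INR (6 + j) / 2) ^ (6 + j).
Proof.
  induction j.
  - replace (6 + 0)%nat with 6%nat by lia. change (fact 6) with 720%nat.
    rewrite INR_IZR_INZ. simpl. lra.
  - replace (6 + S j)%nat with (S (6 + j)) by lia.
    rewrite fact_simpl, mult_INR. set (k := (6 + j)%nat) in *.
    pose proof (binom2 (INR k / 2) (/2) (pred k) ltac:(pose proof (pos_INR k); lra) ltac:(lra)) as B.
    replace (S (pred k)) with k in B by (unfold k; lia).
    assert (Ek : INR k / 2 + / 2 = INR (S k) / 2) by (rewrite S_INR; field).
    rewrite Ek in B.
    assert (E2 : INR k * (INR k / 2) ^ pred k * / 2 = (INR k / 2) ^ k).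
    { assert (G0 : forall m, INR (S m) * (INR (S m) / 2) ^ m * / 2 = (INR (S m) / 2) ^ (S m))
        by (intros m; change ((INR (S m) / 2) ^ (S m)) with (INR (S m) / 2 * (INR (S m) / 2) ^ m); field).
      pose proof (G0 (pred k)) as G1'. replace (S (pred k)) with k in G1' by (unfold k; lia). exact G1'. }
    rewrite E2 in B.
    change ((INR (S k) / 2) ^ S k) with (INR (S k) / 2 * (INR (S k) / 2) ^ k).
    pose proof (pos_INR k). pose proof (fact_pos_R k). rewrite S_INR in *.
    nra.
Qed.

Lemma fact_bound' k : (6 <= k)%nat -> INR (fact k) <= (INR k / 2) ^ k.
Proof. intros H. replace k with (6 + (k - 6))%nat by lia. apply fact_bound. Qed.

Definition K0 n := (5 * n + 6)%nat.
Definition beta n := ac n (K0 n) * INR (fact (K0 n)) * (40 / 9) ^ (K0 n).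

Lemma beta_pos n : (1 <= n)%nat -> 0 < beta n.
Proof.
  intros Hn. unfold beta. apply Rmult_lt_0_compat; [apply Rmult_lt_0_compat|].
  - apply ac_pos; unfold K0; lia.
  - apply fact_pos_R.
  - apply pow_lt; lra.
Qed.

Lemma ac_lower n j : (1 <= n)%nat ->
  beta n <= ac n (K0 n + j) * INR (fact (K0 n + j)) * (40 / 9) ^ (K0 n + j).
Proof.
  intros Hn. induction j.
  - rewrite Nat.add_0_r. unfold beta; lra.
  - replace (K0 n + S j)%nat with (S (K0 n + j)) by lia.
    set (k := (K0 n + j)%nat) in *.
    assert (Hk : INR (K0 n) <= INR k) by (apply le_INR; unfold k; lia).
    assert (HK : INR (K0 n) = 5 * INR n + 6) by (unfold K0; rewrite plus_INR, mult_INR; simpl; ring).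
    pose proof (ac_rec n k Hn) as R. pose proof (pos_INR n).
    pose proof (ac_pos n k Hn ltac:(unfold k, K0; lia)).
    pose proof (fact_pos_R k).
    assert (E : ac n (S k) * INR (fact (S k)) * (40 / 9) ^ S k =
                (ac n k * INR (fact k) * (40 / 9) ^ k) * (40 * (INR k - / 2) / (9 * (4 * INR k + 2 * INR n)))).
    { rewrite fact_simpl, mult_INR. simpl pow.
      apply Rmult_eq_reg_r with (4 * INR k + 2 * INR n); [|nra].
      transitivity (ac n (S k) * INR (S k) * (4 * INR k + 2 * INR n) * (INR (fact k) * (40/9) * (40/9)^k)).
      { ring. }
      rewrite R. field. nra. }
    rewrite E.
    assert (F : 1 <= 40 * (INR k - / 2) / (9 * (4 * INR k + 2 * INR n))).
    { apply Rmult_le_reg_r with (9 * (4 * INR k + 2 * INR n)); [nra|].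
      unfold Rdiv. rewrite Rmult_assoc, Rinv_l by nra. nra. }
    assert (0 <= ac n k * INR (fact k) * (40 / 9) ^ k).
    { apply Rmult_le_pos; [nra|apply pow_le; lra]. }
    nra.
Qed.

Lemma ac_big n k : (1 <= n)%nat -> (K0 n <= k)%nat ->
  beta n * (18 / 5) ^ k <= ac n k * (8 * INR k) ^ k.
Proof.
  intros Hn Hk.
  pose proof (ac_lower n (k - K0 n) Hn) as H. replace (K0 n + (k - K0 n))%nat with k in H by lia.
  assert (Hf := fact_bound' k ltac:(unfold K0 in Hk; lia)).
  assert (Hkp : 0 < INR k) by (apply lt_0_INR; unfold K0 in Hk; lia).
  pose proof (fact_pos_R k).
  assert (E : (8 * INR k) ^ k = (18/5) ^ k * ((INR k / 2) ^ k * (40/9) ^ k)).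
  { rewrite <- !Rpow_mult_distr. f_equal. field. }
  rewrite E.
  assert (0 < (40/9) ^ k) by (apply pow_lt; lra).
  assert (0 < (18/5) ^ k) by (apply pow_lt; lra).
  assert (0 < ac n k) by (apply ac_pos; unfold K0 in Hk; lia).
  assert (INR (fact k) * (40/9)^k <= (INR k / 2) ^ k * (40/9)^k) by (apply Rmult_le_compat_r; lra).
  assert (ac n k * (INR (fact k) * (40/9)^k) <= ac n k * ((INR k / 2) ^ k * (40/9)^k))
    by (apply Rmult_le_compat_l; lra).
  assert (beta n <= ac n k * ((INR k / 2) ^ k * (40/9)^k)) by (rewrite <- Rmult_assoc in *; lra).
  nra.
Qed.

Lemma exp_le_9 k : exp (2 * INR k) <= 9 ^ k.
Proof.
  induction k.
  - simpl. rewrite Rmult_0_r, exp_0. lra.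
  - rewrite S_INR. replace (2 * (INR k + 1)) with (2 * INR k + 1 + 1) by ring.
    rewrite !exp_plus. simpl. pose proof exp_le_3. pose proof (exp_pos 1).
    pose proof (exp_pos (2 * INR k)).
    assert (exp 1 * exp 1 <= 9) by nra. nra.
Qed.

Lemma psi_lower n k s W : (1 <= n)%nat -> (1 <= k)%nat -> 0 <= W ->
  8 * INR k <= s <= 8 * INR k + W -> 0 <= ac n k * (8 * INR k) ^ k - 1 ->
  (ac n k * (8 * INR k) ^ k - 1) ^ 2 * exp (- (8 * INR k + W) / 4) <= psi n s.
Proof.
  intros Hn Hk HW Hs Hy.
  assert (Hk0 : 0 <= 8 * INR k) by (pose proof (pos_INR k); lra).
  assert (HG : ac n k * (8 * INR k) ^ k - 1 <= G n s).
  { destruct k as [|k']; [lia|].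
    pose proof (G_term n (8 * INR (S k')) k' Hn Hk0).
    pose proof (G_le n _ _ Hn Hk0 (proj1 Hs)). lra. }
  unfold psi, mx.
  assert (Hm : ac n k * (8 * INR k) ^ k - 1 <= Rmax (G n s) 0).
  { eapply Rle_trans; [apply HG|apply Rmax_l]. }
  assert (He : exp (- (8 * INR k + W) / 4) <= exp (- s / 4)).
  { destruct (Req_dec s (8 * INR k + W)) as [->|Hne]; [lra|].
    left. apply exp_increasing. lra. }
  pose proof (exp_pos (- (8 * INR k + W) / 4)).
  apply Rmult_le_compat; [apply pow2_ge_0|lra| |auto].
  simpl. rewrite Rmult_1_r. apply Rmult_le_compat; lra.
Qed.

Lemma diverge n r1 : (2 <= n)%nat -> 0 < r1 -> G n (r1 ^ 2) = 0 ->
  forall M, exists R0 v, 0 < R0 /\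
    IInt n (wsq n (fun x => r1 < rnorm n x) (F1 n)) R0 (fun _ => 0) v /\ M < v.
Proof.
  intros Hn Hr1 HG M.
  assert (Hn1 : (1 <= n)%nat) by lia.
  destruct n as [|n']; [lia|].
  set (W := 3 + INR n').
  pose proof (beta_pos (S n') Hn1) as Hb. set (b := beta (S n')) in *.
  set (C := 2 ^ n' * exp (- W / 4) * ((b / 2) ^ 2) / 100).
  assert (HC : 0 < C).
  { unfold C. apply Rdiv_lt_0_compat; [|lra]. apply Rmult_lt_0_compat; [apply Rmult_lt_0_compat|].
    - apply pow_lt; lra.
    - apply exp_pos.
    - apply pow_lt; lra. }
  destruct (INR_unbounded (M / C)) as [j0 Hj0].
  destruct (INR_unbounded (2 / b)) as [j1 Hj1].
  set (j := S (Nat.max (K0 (S n')) (Nat.max j0 j1))).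
  assert (Hj0' : M / C < INR j) by (apply Rlt_le_trans with (INR j0); auto; apply le_INR; unfold j; lia).
  assert (Hj1' : 2 / b < INR j) by (apply Rlt_le_trans with (INR j1); auto; apply le_INR; unfold j; lia).
  assert (HjK : (K0 (S n') <= j)%nat) by (unfold j; lia).
  assert (Hj6 : (6 <= j)%nat) by (unfold j, K0; lia).
  set (k := (2 * j * j)%nat).
  assert (Hkj : (j <= k)%nat) by (unfold k; nia).
  assert (Hk : INR k = 2 * INR j * INR j) by (unfold k; rewrite !mult_INR; simpl; ring).
  assert (HjR : 6 <= INR j) by (replace 6 with (INR 6) by (simpl; ring); apply le_INR; lia).
  assert (HkjR : INR j <= INR k) by (apply le_INR; lia).
  set (T := 4 * INR j).
  set (R0 := T + 1).
  set (p := psi (S n')).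
  assert (Hpc : forall c, continuity_pt p c) by (intros; apply psi_cont; auto).
  assert (Hpn : forall s, 0 <= p s) by (intros; apply psi_nonneg).
  assert (HR0 : 0 < R0) by (unfold R0, T; lra).
  exists R0, (Psi p R0 (S n') (tailQ (S n') (S n') (fun _ => 0))).
  split; [auto|]. split.
  { apply IInt_Psi; auto. apply wsq_psi; auto. }
  rewrite tailQ_n. cbn [Psi].
  set (f := fun t => Psi p R0 n' (0 + t ^ 2)).
  assert (Ef : forall a b, ex_RInt f a b) by (intros; apply ex_RInt_shift, Psi_cont; auto).
  assert (HT : 4 <= T) by (unfold T; lra).
  assert (HiT : 0 < / T <= 1 / 4).
  { split; [apply Rinv_0_lt_compat; lra|]. unfold Rdiv. rewrite Rmult_1_l. apply Rinv_le_contravar; lra. }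
  rewrite <- (RInt_Chasles f (-R0) T R0) by auto.
  rewrite <- (RInt_Chasles f T (T + / T) R0) by auto.
  change (plus (RInt f (- R0) T) (plus (RInt f T (T + / T)) (RInt f (T + / T) R0)))
    with (RInt f (- R0) T + (RInt f T (T + / T) + RInt f (T + / T) R0)).
  assert (0 <= RInt f (-R0) T) by (apply RInt_ge_0; [unfold R0; lra|apply Ef|intros; unfold f; apply Psi_nonneg; auto]).
  assert (0 <= RInt f (T + / T) R0) by (apply RInt_ge_0; [unfold R0; lra|apply Ef|intros; unfold f; apply Psi_nonneg; auto]).
  set (y := ac (S n') k * (8 * INR k) ^ k - 1).
  set (L := y ^ 2 * exp (- (8 * INR k + W) / 4)).
  assert (HP := ac_big (S n') k Hn1 ltac:(lia)). fold b in HP.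
  assert (HPk : INR k <= (18 / 5) ^ k).
  { pose proof (binom2 1 (13/5) (pred k) ltac:(lra) ltac:(lra)) as B.
    replace (S (pred k)) with k in B by lia. rewrite !pow1 in B. replace (1 + 13/5) with (18/5) in B by field.
    pose proof (pos_INR k). nra. }
  assert (Hbig : 2 <= b * (18 / 5) ^ k).
  { apply Rmult_lt_compat_l with (r := b) in Hj1'; auto.
    replace (b * (2 / b)) with 2 in Hj1' by (field; lra). nra. }
  assert (Hy : b / 2 * (18 / 5) ^ k <= y) by (unfold y; lra).
  assert (Hy0 : 0 <= y) by (pose proof (pow_le (18/5) k ltac:(lra)); nra).
  assert (HL0 : 0 <= L) by (unfold L; apply Rmult_le_pos; [apply pow2_ge_0|apply Rlt_le, exp_pos]).
  assert (Hmid : / T * (2 ^ n' * L) <= RInt f T (T + / T)).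
  { replace (/ T * (2 ^ n' * L)) with (RInt (fun _ => 2 ^ n' * L) T (T + / T)).
    2:{ rewrite RInt_const. unfold scal; simpl; unfold mult; simpl. ring. }
    apply RInt_le; [lra|apply ex_RInt_const|apply Ef|].
    intros t Ht. unfold f. apply Psi_LB; auto; [unfold R0; lra|].
    intros s Hs. unfold p, L. apply psi_lower; auto; [lia|unfold W; pose proof (pos_INR n'); lra| ].
    assert (E8 : 8 * INR k = T * T) by (unfold T; rewrite Hk; ring).
    assert (Ht2 : t ^ 2 <= T * T + 3).
    { assert (t * t <= (T + / T) * (T + / T)) by nra.
      assert ((T + / T) * (T + / T) = T * T + 2 + / T * / T) by (field; lra).
      simpl. nra. }
    unfold W. split; nra. }
  assert (Hexp : exp (- (8 * INR k + W) / 4) = / exp (2 * INR k) * exp (- W / 4)).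
  { rewrite <- exp_Ropp, <- exp_plus. f_equal. field. }
  pose proof (exp_le_9 k) as H9.
  assert (H9p : 0 < exp (2 * INR k)) by apply exp_pos.
  set (P := (18/5) ^ k). set (Q := (6/5) ^ k).
  assert (HPQ : P * P = 9 ^ k * (Q * Q)).
  { unfold P, Q. rewrite <- !Rpow_mult_distr. f_equal. field. }
  assert (HQ : INR k / 5 <= Q).
  { pose proof (binom2 1 (1/5) (pred k) ltac:(lra) ltac:(lra)) as B.
    replace (S (pred k)) with k in B by lia. rewrite !pow1 in B. replace (1 + 1/5) with (6/5) in B by field.
    fold Q in B. lra. }
  assert (H9k : 0 < 9 ^ k) by (apply pow_lt; lra).
  assert (HeW : 0 < exp (- W / 4)) by apply exp_pos.
  assert (HL : (b / 2) ^ 2 * (Q * Q) * exp (- W / 4) <= L).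
  { unfold L. rewrite Hexp.
    assert (Y2 : (b / 2 * P) ^ 2 <= y ^ 2) by (apply pow_incr; split; [apply Rmult_le_pos; [lra|apply pow_le; lra]|auto]).
    assert (Hinv : / 9 ^ k <= / exp (2 * INR k)) by (apply Rinv_le_contravar; auto).
    apply Rle_trans with (y ^ 2 * (/ 9 ^ k * exp (- W / 4))).
    - replace ((b / 2) ^ 2 * (Q * Q) * exp (- W / 4)) with ((b / 2 * P) ^ 2 * (/ 9 ^ k * exp (- W / 4))).
      + apply Rmult_le_compat_r; [|auto]. apply Rmult_le_pos; [apply Rlt_le, Rinv_0_lt_compat|]; lra.
      + transitivity ((b / 2) ^ 2 * (P * P) * (/ 9 ^ k * exp (- W / 4))); [ring|].
        rewrite HPQ. field. lra.
    - apply Rmult_le_compat_l; [apply pow2_ge_0|]. apply Rmult_le_compat_r; lra. }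
  assert (Hfin : C * INR j <= / T * (2 ^ n' * L)).
  { unfold C.
    assert (H2n : 0 < 2 ^ n') by (apply pow_lt; lra).
    assert (Hq : INR j * INR j / 25 <= Q * Q) by nra.
    assert (A1 : 2 ^ n' * ((b / 2) ^ 2 * (INR j * INR j / 25) * exp (- W / 4)) <= 2 ^ n' * L).
    { apply Rmult_le_compat_l; [lra|]. eapply Rle_trans; [|apply HL].
      apply Rmult_le_compat_r; [lra|]. apply Rmult_le_compat_l; [apply pow2_ge_0|auto]. }
    assert (A2 : / T * (2 ^ n' * ((b / 2) ^ 2 * (INR j * INR j / 25) * exp (- W / 4))) <= / T * (2 ^ n' * L))
      by (apply Rmult_le_compat_l; lra).
    eapply Rle_trans; [|apply A2]. right. unfold T. field. lra. }
  assert (HCM : M < C * INR j).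
  { apply Rmult_lt_compat_l with (r := C) in Hj0'; auto. replace (C * (M / C)) with M in Hj0' by (field; lra). lra. }
  lra.
Qed.

Theorem lemma4p14 (n : nat) (hn : (2 <= n)%nat) :
  (* the series defining f_1 converges for every r *)
  (forall r, exists l, infinite_sum (f1_term n r) l) /\
  (* f_1 has a unique positive root *)
  (exists! r1, 0 < r1 /\ f1 n r1 = 0) /\
  (* L f_1 = 0 on the whole hyperplane *)
  jacobi_on n (fun _ => True) (F1 n) /\
  forall r1, 0 < r1 -> f1 n r1 = 0 ->
    let Omega := fun x => r1 < rnorm n x in
    (* positive Jacobi function on {r > r1} *)
    (jacobi_on n Omega (F1 n) /\ (forall x, Omega x -> 0 < F1 n x)) /\
    (* not an eigenfunction on {r > r1} *)
    ~ eigenfunction n Omega (F1 n) /\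
    (* int_{r > r1} f_1^2 e^{-r^2/4} dmu = infinity *)
    (forall M, exists R0 v, 0 < R0 /\ IInt n (wsq n Omega (F1 n)) R0 (fun _ => 0) v /\ M < v).
Proof.
  assert (Hn1 : (1 <= n)%nat) by lia.
  split; [intros r; exists (G n (r ^ 2) + 1); apply f1_sum; auto|].
  split; [apply root_unique; auto|].
  split; [intros x _; apply F1_L; auto|].
  intros r1 Hr1 Hf1 Omega.
  rewrite f1_G in Hf1 by auto.
  pose proof (diverge n r1 hn Hr1 Hf1) as HD.
  split; [split|split].
  - intros x _; apply F1_L; auto.
  - intros x Hx. unfold Omega in Hx. rewrite F1_G by auto. rewrite <- Hf1.
    apply G_incr; auto; [apply pow2_ge_0|].
    pose proof (rnorm_sq n x). nra.
  - intros [_ [[_ [Mb HMb]] _]]. destruct (HD Mb) as [R0 [v [HR [HI Hv]]]].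
    specialize (HMb R0 v HR HI). lra.
  - exact HD.
Qed.
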